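(* Let $A$ be an algebra with non-degenerate product, $\Delta$ a regular comultiplication on $A$, and suppose there exists a left integral $\varphi$ on $(A,\Delta)$. Then for any finitely many elements $a_1,\dots,a_n\in A$ there exists $e\in A$ with $a_ie=ea_i=a_i$ for all $i$.
   Context: All algebras are over $\mathbb C$, associative, possibly without identity, with non-degenerate product. $M(A)$ denotes the multiplier algebra and $\iota$ the identity map. A regular comultiplication is a linear map $\Delta:A\to M(A\otimes A)$, not assumed multiplicative, such that: - $\Delta(a)(1\otimes b)$, $(a\otimes1)\Delta(b)$, $\Delta(a)(b\otimes1)$ and $(1\otimes a)\Delta(b)$ all lie in $A\otimes A$; - $(a\otimes1\otimes1)(\Delta\otimes\iota)(\Delta(b)(1\otimes c))=(\iota\otimes\Delta)((a\otimes1)\Delta(b))(1\otimes1\otimes c)$. A left integral is a nonzero linear functional $\varphi$ on $A$ with $(\iota\otimes\varphi)\Delta(a)=\varphi(a)1$ in $M(A)$ for all $a\in A$. Here $(\iota\otimes\varphi)\Delta(a)$ is the multiplier with $((\iota\otimes\varphi)\Delta(a))b=(\iota\otimes\varphi)(\Delta(a)(b\otimes1))$ and $b((\iota\otimes\varphi)\Delta(a))=(\iota\otimes\varphi)((b\otimes1)\Delta(a))$. *)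

(* Defs.v *)
From HB Require Import structures.
From mathcomp Require Import all_boot all_order all_algebra.
From mathcomp Require Import reals complex.

Set Implicit Arguments.
Unset Strict Implicit.
Unset Printing Implicit Defensive.

Import Order.TTheory GRing.Theory Num.Theory.
Local Open Scope ring_scope.

(* The ground field C is R[i] for a realType R (any realType is isomorphic to
   the real numbers, so R[i] is the field of complex numbers). *)

Section Defs.
Variable R : realType.
Local Notation C := (R[i]).
Variable V : lmodType C.

Record nualg := NUAlg {
  amul : V -> V -> V;
  amulA : forall x y z, amul x (amul y z) = amul (amul x y) z;
  amulDl : forall x y z, amul (x + y) z = amul x z + amul y z;
  amulDr : forall x y z, amul x (y + z) = amul x y + amul x z;
  amulZl : forall (c : C) x y, amul (c *: x) y = c *: amul x y;
  amulZr : forall (c : C) x y, amul x (c *: y) = c *: amul x y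
}.

Variable m : nualg.
Local Notation "x ** y" := (amul m x y) (at level 40, left associativity).

Definition nondegenerate_product : Prop :=
  (forall a, (forall b, a ** b = 0) -> a = 0) /\
  (forall a, (forall b, b ** a = 0) -> a = 0).

Definition lin (f : V -> C) : Prop :=
  forall (c : C) x y, f (c *: x + y) = c * f x + f y.

(* Tensor products.  An element of A (x) A is represented by a finite list  *)
(* of pairs s = [(x_k, y_k)] standing for sum_k x_k (x) y_k; two lists      *)
(* represent the same tensor iff all functionals f (x) g agree on them      *)
(* (over a field, V (x) W embeds in the bilinear forms on dual(V) x dual(W)).       *)
(* Similarly for A (x) A (x) A with triples.                                *)
Definition t2 := seq (V * V).
Definition t3 := seq (V * V * V).

Definition teq2 (s t : t2) : Prop :=
  forall f g, lin f -> lin g ->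
    \sum_(p <- s) f p.1 * g p.2 = \sum_(p <- t) f p.1 * g p.2.

Definition teq3 (s t : t3) : Prop :=
  forall f g h, lin f -> lin g -> lin h ->
    \sum_(p <- s) f p.1.1 * g p.1.2 * h p.2 =
    \sum_(p <- t) f p.1.1 * g p.1.2 * h p.2.

Definition tscale2 (c : C) (s : t2) : t2 := [seq (c *: p.1, p.2) | p <- s].
Definition tmul2 (s t : t2) : t2 :=
  [seq (p.1 ** q.1, p.2 ** q.2) | p <- s, q <- t].

Definition lmul_l (b : V) (s : t2) : t2 := [seq (b ** p.1, p.2) | p <- s].
Definition rmul_l (b : V) (s : t2) : t2 := [seq (p.1 ** b, p.2) | p <- s].
Definition lmul_r (b : V) (s : t2) : t2 := [seq (p.1, b ** p.2) | p <- s].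
Definition rmul_r (b : V) (s : t2) : t2 := [seq (p.1, p.2 ** b) | p <- s].

(* A linear map Delta : A -> M(A (x) A) is given by its left and right      *)
(* actions on elementary tensors:                                           *)
(*    DL a x y  represents  Delta(a)(x (x) y),                              *)
(*    DR a x y  represents  (x (x) y)Delta(a).                              *)
(* is_comult_map says that these are linear in a, bilinear in (x,y) (hence  *)
(* define linear maps on A (x) A) and satisfy the multiplier identity       *)
(*    (u (x) v)(Delta(a)(x (x) y)) = ((u (x) v)Delta(a))(x (x) y).          *)
Variables DL DR : V -> V -> V -> t2.

Definition is_comult_map : Prop :=
  (forall (c : C) a b x y,
      teq2 (DL (c *: a + b) x y) (tscale2 c (DL a x y) ++ DL b x y) /\
      teq2 (DR (c *: a + b) x y) (tscale2 c (DR a x y) ++ DR b x y)) /\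
  (forall (c : C) a x x' y,
      teq2 (DL a (c *: x + x') y) (tscale2 c (DL a x y) ++ DL a x' y) /\
      teq2 (DR a (c *: x + x') y) (tscale2 c (DR a x y) ++ DR a x' y)) /\
  (forall (c : C) a x y y',
      teq2 (DL a x (c *: y + y')) (tscale2 c (DL a x y) ++ DL a x y') /\
      teq2 (DR a x (c *: y + y')) (tscale2 c (DR a x y) ++ DR a x y')) /\
  (forall a u v x y,
      teq2 (tmul2 [:: (u, v)] (DL a x y)) (tmul2 (DR a u v) [:: (x, y)])).

(* Delta(a) acting on an arbitrary tensor (by linearity) *)
Definition DLs (a : V) (s : t2) : t2 := flatten [seq DL a p.1 p.2 | p <- s].
Definition DRs (a : V) (s : t2) : t2 := flatten [seq DR a p.1 p.2 | p <- s].

(* The multiplier of A (x) A with left action ML (z |-> M z) and right      *)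
(* action MR (z |-> z M) is equal to the element s of A (x) A.             *)
Definition represents2 (ML MR : t2 -> t2) (s : t2) : Prop :=
  forall x y, teq2 (ML [:: (x, y)]) (tmul2 s [:: (x, y)]) /\
              teq2 (MR [:: (x, y)]) (tmul2 [:: (x, y)] s).

(* s = Delta(a)(1 (x) b) *)
Definition rep_D_1b (a b : V) (s : t2) : Prop :=
  represents2 (fun z => DLs a (lmul_r b z)) (fun z => rmul_r b (DRs a z)) s.
(* s = (a (x) 1)Delta(b) *)
Definition rep_a1_D (a b : V) (s : t2) : Prop :=
  represents2 (fun z => lmul_l a (DLs b z)) (fun z => DRs b (rmul_l a z)) s.
(* s = Delta(a)(b (x) 1) *)
Definition rep_D_b1 (a b : V) (s : t2) : Prop :=
  represents2 (fun z => DLs a (lmul_l b z)) (fun z => rmul_l b (DRs a z)) s.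
(* s = (1 (x) a)Delta(b) *)
Definition rep_1a_D (a b : V) (s : t2) : Prop :=
  represents2 (fun z => lmul_r a (DLs b z)) (fun z => DRs b (rmul_r a z)) s.

(* Coassociativity:                                                         *)
(* (a(x)1(x)1)(Delta(x)i)(Delta(b)(1(x)c)) = (i(x)Delta)((a(x)1)Delta(b))(1(x)1(x)c) *)
(* as multipliers of A (x) A (x) A: equal left and right actions on all     *)
(* elementary tensors u (x) v (x) w.                                        *)
Definition coassoc : Prop :=
  forall a b c (s s' : t2), rep_D_1b b c s -> rep_a1_D a b s' ->
  forall u v w,
    teq3
      (flatten [seq [seq (a ** r.1, r.2, pq.2 ** w) | r <- DL pq.1 u v] | pq <- s])
      (flatten [seq [seq (rt.1 ** u, k.1, k.2) | k <- DL rt.2 v (c ** w)] | rt <- s'])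
    /\
    teq3
      (flatten [seq [seq (r.1, r.2, w ** pq.2) | r <- DR pq.1 (u ** a) v] | pq <- s])
      (flatten [seq [seq (u ** rt.1, k.1, k.2 ** c) | k <- DR rt.2 v w] | rt <- s']).

Definition regular_comult : Prop :=
  is_comult_map /\
  (forall a b, exists s, rep_D_1b a b s) /\
  (forall a b, exists s, rep_a1_D a b s) /\
  (forall a b, exists s, rep_D_b1 a b s) /\
  (forall a b, exists s, rep_1a_D a b s) /\
  coassoc.

(* (i (x) phi) applied to a tensor *)
Definition slice_phi (phi : V -> C) (s : t2) : V :=
  \sum_(p <- s) phi p.2 *: p.1.

(* Left integral: a nonzero linear functional phi with (i(x)phi)Delta(a) =   *)
(* phi(a)1 in M(A), i.e. for all b, (i(x)phi)(Delta(a)(b(x)1)) = phi(a) b    *)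
(* and (i(x)phi)((b(x)1)Delta(a)) = phi(a) b.                               *)
Definition left_integral (phi : V -> C) : Prop :=
  lin phi /\ (exists a, phi a != 0) /\
  (forall a b s, rep_D_b1 a b s -> slice_phi phi s = phi a *: b) /\
  (forall a b s, rep_a1_D b a s -> slice_phi phi s = phi a *: b).

End Defs.

(* Main.v *)
Require Import Defs.
From HB Require Import structures.
From mathcomp Require Import all_boot all_order all_algebra.
From mathcomp Require Import reals complex.
From mathcomp Require Import boolp classical_sets.
Import GRing.Theory.

Local Open Scope ring_scope.

Section Sep.
Variable R : realType.
Variable V : lmodType R[i].

Definition closedW (W : V -> Prop) :=
  forall (c : R[i]) x y, W x -> W y -> W (c *: x + y).

Lemma sep (W : V -> Prop) (v : V) : W 0 -> closedW W -> ~ W v ->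
  exists f : V -> R[i], lin f /\ (forall w, W w -> f w = 0) /\ f v = 1.
Proof.
move=> W0 cW nWv.
pose Good (M : set V) := (forall w, W w -> M w) /\ closedW M /\ ~ M v.
pose P (M : set V) := M = set0 \/ Good M.
have [A [PA maxA]] : exists A, P A /\ forall B, (A `<` B)%classic -> ~ P B.
  apply: Zorn_bigcup => F FP totF.
  have [[X [FX [x0 Xx]]]|none] := pselect (exists X, F X /\ exists x, X x).
  - right; split; [|split].
    + move=> w Ww; exists X => //; case: (FP X FX) => [X0|[G _]]; last by apply: G.
      by move: Xx; rewrite X0.
    + move=> c x y [X1 F1 x1] [X2 F2 y2].
      have [S12|S21] := totF _ _ F1 F2.
      * exists X2 => //; case: (FP X2 F2) => [X0|[_ [G _]]].
          by move: y2; rewrite X0.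
        by apply: G => //; apply: S12.
      * exists X1 => //; case: (FP X1 F1) => [X0|[_ [G _]]].
          by move: x1; rewrite X0.
        by apply: G => //; apply: S21.
    + move=> [Y FY Yv]; case: (FP Y FY) => [Y0|[_ [_ G]]] //.
      by move: Yv; rewrite Y0.
  - left; apply/seteqP; split => t // [Y FY Yt].
    by exfalso; apply: none; exists Y; split => //; exists t.
have GA : Good A.
  case: PA => // A0; exfalso; apply: (maxA W).
    split; first by rewrite A0.
    by rewrite A0 => /(_ 0 W0).
  by right; split => //.
case: GA => [WA [cA nAv]].
have A0 : A 0 by apply: WA.
have Asub : forall x y, A x -> A y -> A (x - y).
  move=> x y Ax Ay; have := cA (-1) y x Ay Ax.
  by rewrite scaleN1r addrC.
have ex : forall x, exists l : R[i], A (x - l *: v).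
  move=> x; apply: contrapT => nex.
  pose B (z : V) := exists m l, A m /\ z = m + l *: x.
  apply: (maxA B).
    split.
      by move=> z Az; exists z, 0; rewrite scale0r addr0.
    move=> Bsub; apply: nex; exists 0; rewrite scale0r subr0.
    by apply: Bsub; exists 0, 1; rewrite scale1r add0r; split.
  right; split; [|split].
  - by move=> w Ww; exists w, 0; rewrite scale0r addr0; split => //; apply: WA.
  - move=> c z1 z2 [m1 [l1 [A1 ->]]] [m2 [l2 [A2 ->]]].
    exists (c *: m1 + m2), (c * l1 + l2); split; first by apply: cA.
    by rewrite scalerDr scalerDl scalerA addrACA.
  - move=> [m [l [Am vE]]].
    have [l0|lne] := eqVneq l 0.
      by apply: nAv; move: vE; rewrite l0 scale0r addr0 => ->.
    apply: nex; exists l^-1.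
    have -> : x - l^-1 *: v = (- l^-1) *: m.
      by rewrite vE scalerDr scalerA mulVf // scale1r scaleNr opprD addrCA subrr addr0.
    by rewrite -[_ *: m]addr0; apply: cA.
have uniq : forall x l1 l2, A (x - l1 *: v) -> A (x - l2 *: v) -> l1 = l2.
  move=> x l1 l2 H1 H2; have := Asub _ _ H2 H1.
  rewrite opprB addrC addrA subrK -scalerBl => H.
  apply/eqP; rewrite -subr_eq0; apply/eqP.
  apply: contrapT => ne; apply: nAv.
  have := cA (l1 - l2)^-1 _ 0 H A0.
  by rewrite addr0 scalerA mulVf ?scale1r //; apply/eqP.
pose f x := projT1 (cid (ex x)).
have fP : forall x, A (x - f x *: v) := fun x => projT2 (cid (ex x)).
exists f; split; [|split].
- move=> c x y; apply: (uniq (c *: x + y)); first exact: fP.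
  have := cA c _ _ (fP x) (fP y).
  by rewrite scalerDl -scalerA opprD addrACA -scalerBr.
- move=> w Ww; apply: (uniq w); first exact: fP.
  by rewrite scale0r subr0; apply: WA.
- apply: (uniq v); first exact: fP.
  by rewrite scale1r subrr.
Qed.

End Sep.

Section Main.
Variable R : realType.
Variable V : lmodType R[i].
Variable m : nualg V.
Local Notation "x ** y" := (amul m x y) (at level 40, left associativity).

Lemma lin0 (f : V -> R[i]) : lin f -> f 0 = 0.
Proof.
move=> lf; have := lf 1 0 0; rewrite scale1r addr0 mul1r.
by move=> /esym /(congr1 (fun z => z - f 0)); rewrite addrK subrr.
Qed.

Lemma linD (f : V -> R[i]) x y : lin f -> f (x + y) = f x + f y.
Proof. by move=> lf; have := lf 1 x y; rewrite scale1r mul1r. Qed.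

Lemma linZ (f : V -> R[i]) c x : lin f -> f (c *: x) = c * f x.
Proof. by move=> lf; rewrite -[c *: x]addr0 lf lin0 // addr0. Qed.

Lemma linN (f : V -> R[i]) x : lin f -> f (- x) = - f x.
Proof. by move=> lf; rewrite -scaleN1r linZ // mulN1r. Qed.

Lemma linB (f : V -> R[i]) x y : lin f -> f (x - y) = f x - f y.
Proof. by move=> lf; rewrite linD // linN. Qed.

Lemma lin_sumZ (f : V -> R[i]) (I : Type) (s : seq I) (c : I -> R[i]) (w : I -> V) :
  lin f -> f (\sum_(t <- s) c t *: w t) = \sum_(t <- s) c t * f (w t).
Proof.
move=> lf; elim: s => [|t s IH]; first by rewrite !big_nil lin0.
by rewrite !big_cons linD // linZ // IH.
Qed.

Lemma amul0l y : 0 ** y = 0.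
Proof.
have := amulDl m 0 0 y; rewrite addr0.
by move=> /esym /(congr1 (fun z => z - 0 ** y)); rewrite addrK subrr.
Qed.

Lemma amul0r y : y ** 0 = 0.
Proof.
have := amulDr m y 0 0; rewrite addr0.
by move=> /esym /(congr1 (fun z => z - y ** 0)); rewrite addrK subrr.
Qed.

Lemma amulNl x y : (- x) ** y = - (x ** y).
Proof. by rewrite -scaleN1r amulZl scaleN1r. Qed.
Lemma amulNr x y : x ** (- y) = - (x ** y).
Proof. by rewrite -scaleN1r amulZr scaleN1r. Qed.
Lemma amulBl x y z : (x - y) ** z = x ** z - y ** z.
Proof. by rewrite amulDl amulNl. Qed.
Lemma amulBr x y z : x ** (y - z) = x ** y - x ** z.
Proof. by rewrite amulDr amulNr. Qed.

Lemma amul_sumZl (I : Type) (s : seq I) (c : I -> R[i]) (w : I -> V) b :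
  (\sum_(t <- s) c t *: w t) ** b = \sum_(t <- s) c t *: (w t ** b).
Proof.
elim: s => [|t s IH]; first by rewrite !big_nil amul0l.
by rewrite !big_cons amulDl amulZl IH.
Qed.

Lemma amul_sumZr (I : Type) (s : seq I) (c : I -> R[i]) (w : I -> V) b :
  b ** (\sum_(t <- s) c t *: w t) = \sum_(t <- s) c t *: (b ** w t).
Proof.
elim: s => [|t s IH]; first by rewrite !big_nil amul0r.
by rewrite !big_cons amulDr amulZr IH.
Qed.

Lemma lin_mr (f : V -> R[i]) x : lin f -> lin (fun z => f (z ** x)).
Proof. by move=> lf c y z /=; rewrite amulDl amulZl lf. Qed.

Lemma lin_ml (f : V -> R[i]) x : lin f -> lin (fun z => f (x ** z)).
Proof. by move=> lf c y z /=; rewrite amulDr amulZr lf. Qed.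

Hypothesis nd : nondegenerate_product m.

Lemma sepv v : (forall f : V -> R[i], lin f -> f v = 0) -> v = 0.
Proof.
move=> H; apply: contrapT => nv.
have cl : closedW R V (fun w : V => w = 0).
  by move=> c x y hx hy; rewrite hx hy scaler0 addr0.
have [f [lf [_ fv]]] := sep R V (fun w => w = 0) v erefl cl nv.
by move: (H f lf); rewrite fv => /eqP; rewrite oner_eq0.
Qed.

Definition sum2 (f g : V -> R[i]) (T : t2 V) := \sum_(t <- T) f t.1 * g t.2.

Lemma elim_r (T T' : t2 V) :
  (forall x y (f g : V -> R[i]), lin f -> lin g ->
     sum2 (fun z => f (z ** x)) (fun z => g (z ** y)) T =
     sum2 (fun z => f (z ** x)) (fun z => g (z ** y)) T') ->
  forall f g : V -> R[i], lin f -> lin g -> sum2 f g T = sum2 f g T'.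
Proof.
move=> H.
have step1 : forall x (f g : V -> R[i]), lin f -> lin g ->
    sum2 (fun z => f (z ** x)) g T = sum2 (fun z => f (z ** x)) g T'.
  move=> x f g lf lg.
  pose U := \sum_(t <- T) f (t.1 ** x) *: t.2 - \sum_(t <- T') f (t.1 ** x) *: t.2.
  have U0 : U = 0.
    apply: (proj1 nd) => b; apply: sepv => h lh.
    rewrite /U amulBl !amul_sumZl linB // !lin_sumZ //.
    by apply/eqP; rewrite subr_eq0; apply/eqP; apply: H.
  have := lin0 g lg; rewrite -U0 /U linB // !lin_sumZ // => /eqP.
  by rewrite subr_eq0 => /eqP.
move=> f g lf lg.
pose U := \sum_(t <- T) g t.2 *: t.1 - \sum_(t <- T') g t.2 *: t.1.
have U0 : U = 0.
  apply: (proj1 nd) => b; apply: sepv => h lh.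
  rewrite /U amulBl !amul_sumZl linB // !lin_sumZ //.
  apply/eqP; rewrite subr_eq0; apply/eqP.
  have := step1 b h g lh lg; rewrite /sum2.
  by under eq_bigr do rewrite mulrC; under [RHS]eq_bigr do rewrite mulrC.
have := lin0 f lf; rewrite -U0 /U linB // !lin_sumZ // => /eqP.
rewrite subr_eq0 => /eqP; rewrite /sum2.
by under eq_bigr do rewrite mulrC; under [X in _ = X -> _]eq_bigr do rewrite mulrC.
Qed.


Lemma elim_l (T T' : t2 V) :
  (forall x y (f g : V -> R[i]), lin f -> lin g ->
     sum2 (fun z => f (x ** z)) (fun z => g (y ** z)) T =
     sum2 (fun z => f (x ** z)) (fun z => g (y ** z)) T') ->
  forall f g : V -> R[i], lin f -> lin g -> sum2 f g T = sum2 f g T'.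
Proof.
move=> H.
have step1 : forall x (f g : V -> R[i]), lin f -> lin g ->
    sum2 (fun z => f (x ** z)) g T = sum2 (fun z => f (x ** z)) g T'.
  move=> x f g lf lg.
  pose U := \sum_(t <- T) f (x ** t.1) *: t.2 - \sum_(t <- T') f (x ** t.1) *: t.2.
  have U0 : U = 0.
    apply: (proj2 nd) => b; apply: sepv => h lh.
    rewrite /U amulBr !amul_sumZr linB // !lin_sumZ //.
    by apply/eqP; rewrite subr_eq0; apply/eqP; apply: H.
  have := lin0 g lg; rewrite -U0 /U linB // !lin_sumZ // => /eqP.
  by rewrite subr_eq0 => /eqP.
move=> f g lf lg.
pose U := \sum_(t <- T) g t.2 *: t.1 - \sum_(t <- T') g t.2 *: t.1.
have U0 : U = 0.
  apply: (proj2 nd) => b; apply: sepv => h lh.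
  rewrite /U amulBr !amul_sumZr linB // !lin_sumZ //.
  apply/eqP; rewrite subr_eq0; apply/eqP.
  have := step1 b h g lh lg; rewrite /sum2.
  by under eq_bigr do rewrite mulrC; under [RHS]eq_bigr do rewrite mulrC.
have := lin0 f lf; rewrite -U0 /U linB // !lin_sumZ // => /eqP.
rewrite subr_eq0 => /eqP; rewrite /sum2.
by under eq_bigr do rewrite mulrC; under [X in _ = X -> _]eq_bigr do rewrite mulrC.
Qed.

Lemma sum_tmul_r (s : t2 V) x y (f g : V -> R[i]) :
  \sum_(p <- tmul2 m s [:: (x, y)]) f p.1 * g p.2 =
  \sum_(p <- s) f (p.1 ** x) * g (p.2 ** y).
Proof.
elim: s => [|p s IH]; first by rewrite !big_nil.
by rewrite /tmul2 /= !big_cons IH.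
Qed.

Lemma sum_tmul_l (s : t2 V) x y (f g : V -> R[i]) :
  \sum_(p <- tmul2 m [:: (x, y)] s) f p.1 * g p.2 =
  \sum_(p <- s) f (x ** p.1) * g (y ** p.2).
Proof. by rewrite /tmul2 /= cats0 big_map. Qed.

Variables DL DR : V -> V -> V -> t2 V.

Lemma DLs1 c x y : DLs DL c [:: (x, y)] = DL c x y.
Proof. by rewrite /DLs /= cats0. Qed.
Lemma DRs1 c x y : DRs DR c [:: (x, y)] = DR c x y.
Proof. by rewrite /DRs /= cats0. Qed.

Variable phi : V -> R[i].
Hypothesis reg : regular_comult m DL DR.
Hypothesis integ : left_integral m DL DR phi.

Lemma right_unit1 a : exists e, a ** e = a.
Proof.
case: reg => [_ [Hr1b [Ha1 [_ [_ _]]]]].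
case: integ => [lphi [[c phic] [_ Hint]]].
apply: contrapT => ne.
have cl : closedW R V (fun w => exists x, w = a ** x).
  by move=> k _ _ [x ->] [y ->]; exists (k *: x + y); rewrite amulDr amulZr.
have W0 : exists x, 0 = a ** x by exists 0; rewrite amul0r.
have nW : ~ (exists x, a = a ** x) by move=> [x hx]; apply: ne; exists x.
have [w [lw [wW wa]]] := sep R V _ a W0 cl nW.
have [s hs] := Ha1 a c.
have sl := Hint c a s hs.
pose Z := \sum_(p <- s) w p.1 *: p.2.
have Z0 : Z = 0.
  apply: (proj1 nd) => y; apply: sepv => g lg.
  rewrite /Z amul_sumZl lin_sumZ //.
  have [s' hs'] := Hr1b c y.
  have E : sum2 w g [seq (p.1, p.2 ** y) | p <- s] =
           sum2 w g [seq (a ** q.1, q.2) | q <- s'].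
    apply: elim_r => // x y' f g' lf lg'.
    have h1 := (proj1 (hs x (y ** y'))) f g' lf lg'.
    have h2 := (proj1 (hs' x y')) (fun z => f (a ** z)) g' (lin_ml f a lf) lg'.
    rewrite sum_tmul_r /lmul_l DLs1 big_map /= in h1.
    rewrite (sum_tmul_r _ _ _ (fun z => f (a ** z))) /lmul_r /= DLs1 /= in h2.
    rewrite /sum2 !big_map /=.
    under eq_bigr do rewrite -amulA.
    rewrite -h1 h2.
    by apply: eq_bigr => q _; rewrite amulA.
  rewrite /sum2 !big_map /= in E.
  rewrite E; apply: big1 => q _; rewrite wW ?mul0r //; by exists q.1.
have h : \sum_(t <- s) w t.1 * phi t.2 = 0.
  by have := congr1 phi Z0; rewrite /Z lin_sumZ // lin0.
have h2 := congr1 w sl; rewrite /slice_phi lin_sumZ // linZ // wa mulr1 in h2.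
move: phic; rewrite -h2.
under eq_bigr do rewrite mulrC.
by rewrite h eqxx.
Qed.


Lemma left_unit1 a : exists e, e ** a = a.
Proof.
case: reg => [_ [_ [_ [Hb1 [H1a _]]]]].
case: integ => [lphi [[c phic] [Hint _]]].
apply: contrapT => ne.
have cl : closedW R V (fun w => exists x, w = x ** a).
  by move=> k _ _ [x ->] [y ->]; exists (k *: x + y); rewrite amulDl amulZl.
have W0 : exists x, 0 = x ** a by exists 0; rewrite amul0l.
have nW : ~ (exists x, a = x ** a) by move=> [x hx]; apply: ne; exists x.
have [w [lw [wW wa]]] := sep R V _ a W0 cl nW.
have [s hs] := Hb1 c a.
have sl := Hint c a s hs.
pose Z := \sum_(p <- s) w p.1 *: p.2.
have Z0 : Z = 0.
  apply: (proj2 nd) => y; apply: sepv => g lg.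
  rewrite /Z amul_sumZr lin_sumZ //.
  have [s' hs'] := H1a y c.
  have E : sum2 w g [seq (p.1, y ** p.2) | p <- s] =
           sum2 w g [seq (q.1 ** a, q.2) | q <- s'].
    apply: elim_l => // x y' f g' lf lg'.
    have h1 := (proj2 (hs x (y' ** y))) f g' lf lg'.
    have h2 := (proj2 (hs' x y')) (fun z => f (z ** a)) g' (lin_mr f a lf) lg'.
    rewrite sum_tmul_l /rmul_l DRs1 big_map /= in h1.
    rewrite (sum_tmul_l _ _ _ (fun z => f (z ** a))) /rmul_r /= DRs1 /= in h2.
    rewrite /sum2 !big_map /=.
    under eq_bigr do rewrite amulA.
    rewrite -h1 h2.
    by apply: eq_bigr => q _; rewrite amulA.
  rewrite /sum2 !big_map /= in E.
  rewrite E; apply: big1 => q _; rewrite wW ?mul0r //; by exists q.1.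
have h : \sum_(t <- s) w t.1 * phi t.2 = 0.
  by have := congr1 phi Z0; rewrite /Z lin_sumZ // lin0.
have h2 := congr1 w sl; rewrite /slice_phi lin_sumZ // linZ // wa mulr1 in h2.
move: phic; rewrite -h2.
under eq_bigr do rewrite mulrC.
by rewrite h eqxx.
Qed.

Lemma right_units (l : seq V) : exists e, forall b, b \in l -> b ** e = b.
Proof.
elim: l => [|b l [e He]]; first by exists 0.
have [f Hf] := right_unit1 (b - b ** e).
exists (e + f - e ** f) => t; rewrite inE => /orP [/eqP ->|tl].
  rewrite amulBr amulDr amulA.
  by rewrite -addrA -amulBl Hf addrC subrK.
by rewrite amulBr amulDr amulA He // addrK.
Qed.

Lemma left_units (l : seq V) : exists e, forall b, b \in l -> e ** b = b.
Proof.
elim: l => [|b l [e He]]; first by exists 0.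
have [f Hf] := left_unit1 (b - e ** b).
exists (e + f - f ** e) => t; rewrite inE => /orP [/eqP ->|tl].
  rewrite amulBl amulDl -amulA.
  by rewrite -addrA -amulBr Hf addrC subrK.
by rewrite amulBl amulDl -amulA He // addrK.
Qed.

Lemma units (l : seq V) : exists e, forall b, b \in l -> b ** e = b /\ e ** b = b.
Proof.
have [e He] := left_units l; have [f Hf] := right_units l.
exists (f + e - f ** e) => b bl; split.
  by rewrite amulBr amulDr amulA Hf // addrK.
by rewrite amulBl amulDl -amulA He // addrAC subrr add0r.
Qed.

End Main.

Theorem proposition1p6 (R : realType) (V : lmodType R[i]) (m : nualg V)
  (DL DR : V -> V -> V -> t2 V) (phi : V -> R[i]) :
  nondegenerate_product m ->
  regular_comult m DL DR ->
  left_integral m DL DR phi ->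
  forall (n : nat) (a : 'I_n -> V),
    exists e : V, forall i : 'I_n, amul m (a i) e = a i /\ amul m e (a i) = a i.
Proof.
move=> nd reg integ n a.
have [e He] := @units R V m nd DL DR phi reg integ (codom a).
by exists e => i; apply: He; apply: codom_f.
Qed.
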